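(* Let $N \ge 1$ and let $W_N$ be the set of binary words of length $N$. Define $\varphi_6 : W_N \to W_N$ by $\varphi_6(u) = v\, 01011\, 0^p v'$ if $u = v 0^p 10110 v'$ where $p \geq 2$, $v'$ is a (possibly empty) word, and $v$ is a (possibly empty) word which is either empty or ends with the letter $1$ and such that $v 0^p$ does not contain $0010110$ as a contiguous subword; and $\varphi_6(u) = u$ otherwise. Then $|P(\varphi_6(u))| \leq |P(u)|$ for every $u \in W_N$.
   Context: For a binary word $x$, $x^j$ denotes $j$ concatenated copies of $x$, and juxtaposition denotes concatenation. For a binary word $w = w_1 \cdots w_\ell$ of length $\ell$, $P(w)$ is the set of indices $i \geq 2$ such that at least one of the following holds: (i) $\ell \geq i$ and $w_{i-1} w_i = 00$; (ii) $\ell \geq i+2$ and $w_{i-1} w_i w_{i+1} w_{i+2} = 0100$; (iii) $\ell \geq i+3$ and $w_{i-1} \cdots w_{i+3} = 01010$. *)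

(* Defs.v *)
(* Binary words are seq bool, letter 0 = false, letter 1 = true. *)
From mathcomp Require Import all_boot.
Set Implicit Arguments. Unset Strict Implicit. Unset Printing Implicit Defensive.

(* w_i (1-indexed), for 1 <= i <= size w *)
Definition letter (w : seq bool) (i : nat) : bool := nth false w i.-1.

Definition inP (w : seq bool) (i : nat) : bool :=
  let l := size w in
  (2 <= i) &&
  [|| (i <= l) && (~~ letter w i.-1) && (~~ letter w i)
    , (i + 2 <= l) && [&& ~~ letter w i.-1, letter w i,
                          ~~ letter w i.+1 & ~~ letter w i.+2]
    | (i + 3 <= l) && [&& ~~ letter w i.-1, letter w i, ~~ letter w i.+1,
                          letter w i.+2 & ~~ letter w i.+3] ].

(* |P(w)|: all elements of P(w) lie in [2, size w] *)
Definition cardP (w : seq bool) : nat := count (inP w) (iota 0 (size w).+1).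

Definition w10110 : seq bool := [:: true; false; true; true; false].
Definition w01011 : seq bool := [:: false; true; false; true; true].
Definition w0010110 : seq bool := [:: false; false; true; false; true; true; false].

(* u = v 0^p 10110 v' with v := take i u, p >= 2, v empty or ending in 1,
   and v 0^p not containing 0010110 *)
Definition phi6_dec (u : seq bool) (i p : nat) : bool :=
  let v := take i u in
  let rest := drop i u in
  [&& i <= size u, 2 <= p, take p rest == nseq p false,
      take 5 (drop p rest) == w10110, p + 5 <= size rest,
      (v == [::]) || (last false v == true)
    & ~~ infix w0010110 (v ++ nseq p false)].

Definition phi6 (u : seq bool) : seq bool :=
  match [pick ip : 'I_(size u).+1 * 'I_(size u).+1 | phi6_dec u ip.1 ip.2] with
  | Some ip =>
      let i := nat_of_ord ip.1 in let p := nat_of_ord ip.2 in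
      take i u ++ w01011 ++ nseq p false ++ drop (p + 5) (drop i u)
  | None => u
  end.

(* Main.v *)
Require Import Defs.
From mathcomp Require Import all_boot.
From mathcomp Require Import zify.

Definition pat (s : seq bool) : bool :=
 match s with
 | false :: false :: _ => true
 | false :: true :: false :: false :: _ => true
 | false :: true :: false :: true :: false :: _ => true
 | _ => false end.

Fixpoint cnt (w : seq bool) : nat :=
  match w with [::] => 0 | a :: t => pat (a :: t) + cnt t end.

Lemma nthS (t s : seq bool) j : nth false (t ++ s) (size t + j) = nth false s j.
Proof. by rewrite nth_cat ltnNge leq_addr /= addKn. Qed.

Lemma inP_pat w k : inP w k.+2 = pat (drop k w).
Proof.
case: (leqP k (size w)) => hk.
- rewrite -[in LHS](cat_take_drop k w).
  have := size_takel hk.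
  move: (take k w) (drop k w) => t s ht; subst k; clear hk.
  rewrite /inP /letter /= size_cat.
  have H0 : nth false (t ++ s) (size t) = nth false s 0 by rewrite nth_cat ltnn subnn.
  have H1 : nth false (t ++ s) (size t).+1 = nth false s 1.
    by rewrite nth_cat; case: ifP => h; [lia | congr nth; lia].
  have H2 : nth false (t ++ s) (size t).+2 = nth false s 2.
    by rewrite nth_cat; case: ifP => h; [lia | congr nth; lia].
  have H3 : nth false (t ++ s) (size t).+3 = nth false s 3.
    by rewrite nth_cat; case: ifP => h; [lia | congr nth; lia].
  have H4 : nth false (t ++ s) (size t).+4 = nth false s 4.
    by rewrite nth_cat; case: ifP => h; [lia | congr nth; lia].
  rewrite H0 H1 H2 H3 H4.
  have e1 : ((size t).+1 < size t + size s) = (2 <= size s) by lia.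
  have e2 : ((size t).+2 + 2 <= size t + size s) = (4 <= size s) by lia.
  have e3 : ((size t).+2 + 3 <= size t + size s) = (5 <= size s) by lia.
  rewrite e1 e2 e3; clear H0 H1 H2 H3 H4 e1 e2 e3.
  by case: s => [|[] [|[] [|[] [|[] [|[] s]]]]].
- rewrite drop_oversize; last by lia.
  rewrite /inP.
  have -> : (k.+2 <= size w) = false by lia.
  have -> : (k.+2 + 2 <= size w) = false by lia.
  have -> : (k.+2 + 3 <= size w) = false by lia.
  by rewrite !andbF.
Qed.

Lemma cnt_count w n : size w <= n.+1 -> cnt w = count (fun k => pat (drop k w)) (iota 0 n).
Proof.
elim: w n => [|a t IH] n hs /=.
- by rewrite (@eq_count _ _ pred0) ?count_pred0.
- case: n hs => [|m] hs.
  + by case: t IH hs => // _ _; case: a.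
  + rewrite /= (IH m) //.
    by rewrite -[1]addn0 iotaDl count_map.
Qed.

Lemma cardP_cnt w : cardP w = cnt w.
Proof.
rewrite /cardP.
case Hl: (size w) => [|l].
- by case: w Hl.
- rewrite /= -[2]addn0 iotaDl count_map (@cnt_count w l); last by rewrite Hl.
  rewrite !add0n.
  by apply: eq_count => k /=; rewrite add2n inP_pat.
Qed.

Lemma pat_swap t Z1 Z2 :
  pat (t ++ true :: false :: false :: Z1) =
  pat (t ++ true :: false :: true :: false :: Z2).
Proof. by case: t => [|[] [|[] [|[] [|[] [|[] t]]]]]. Qed.

Arguments pat : simpl never.

Lemma cnt_v t X Y :
  cnt X = cnt Y ->
  (exists Z1, X = false :: false :: Z1) ->
  (exists Z2, Y = false :: true :: false :: Z2) ->
  cnt (rcons t true ++ X) = cnt (rcons t true ++ Y).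
Proof.
move=> hXY [Z1 hX] [Z2 hY].
elim: t => [|a t IH].
- by rewrite /= hXY.
- rewrite rcons_cons /= IH; congr addn.
  by rewrite hX hY !cat_rcons -!cat_cons (pat_swap _ _ Z2).
Qed.

Lemma cnt_zeros q Z : cnt (nseq q.+1 false ++ Z) = q + cnt (false :: Z).
Proof. by elim: q => //= q ->; rewrite add1n. Qed.

Lemma cnt_mid q Z :
  cnt (nseq q.+2 false ++ w10110 ++ Z) = cnt (w01011 ++ nseq q.+2 false ++ Z).
Proof.
rewrite cnt_zeros.
have -> : cnt (w01011 ++ nseq q.+2 false ++ Z) = cnt (nseq q.+2 false ++ Z) by [].
by rewrite cnt_zeros.
Qed.

Lemma key v p Z : 2 <= p -> (v == [::]) || (last false v == true) ->
  cnt (v ++ w01011 ++ nseq p false ++ Z) = cnt (v ++ nseq p false ++ w10110 ++ Z).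
Proof.
case: p => [|[|q]] // _.
case/lastP: v => [|t b]; first by rewrite !cat0s cnt_mid.
rewrite last_rcons => /orP[|/eqP ->]; first by case: t.
symmetry; apply: cnt_v; first exact: cnt_mid.
- by exists (nseq q false ++ w10110 ++ Z).
- by exists (true :: true :: nseq q.+2 false ++ Z).
Qed.

Theorem lemma4p6 (N : nat) (hN : 1 <= N) (u : seq bool) (hu : size u = N) :
  cardP (phi6 u) <= cardP u.
Proof.
rewrite /phi6; case: pickP => [[i p] /= hd | _]; last by [].
case/and5P: hd => hi hp h1 h2 /and3P[h3 hv _].
rewrite !cardP_cnt.
have E : u = take i u ++ nseq p false ++ w10110 ++ drop (p + 5) (drop i u).
  by rewrite (addnC p 5) -drop_drop -(eqP h1) -(eqP h2) !cat_take_drop.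
rewrite [in X in _ <= X]E key //.
Qed.
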